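(* Let $G$ be a connected labeled bipartite graph with an odd number of edges whose vertex set is partitioned into two independent sets $A$ and $B$ with $|A|\neq|B|$. Then $X(G;\mathbf{x},q)$ is not palindromic; in particular it is not symmetric.
   Context: A labeled graph is a finite simple graph with vertex set $[n]$. A proper coloring is $c\colon[n]\to\{1,2,\dots\}$ with adjacent vertices colored differently; $\operatorname{asc}(c)=\#\{ij\in E: i<j,\ c(i)<c(j)\}$. The CQF is $X(G;\mathbf{x},q)=\sum_{c \text{ proper}} x_{c(1)}\cdots x_{c(n)}q^{\operatorname{asc}(c)}$. It is symmetric if each coefficient of $q^k$ is a symmetric function, and palindromic if, with $m=|E|$, the coefficient of $q^k$ equals that of $q^{m-k}$ for all $k$. *)

(* Defs.v *)
From mathcomp Require Import all_boot.
Set Implicit Arguments. Unset Strict Implicit. Unset Printing Implicit Defensive.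

(* A labeled simple graph on vertex set [n] = 'I_n (vertex v+1 of the paper is
   v : 'I_n) is given by an adjacency relation e, assumed irreflexive and
   symmetric. *)
Definition simple_graph (n : nat) (e : rel 'I_n) : Prop :=
  irreflexive e /\ symmetric e.

Definition edges (n : nat) (e : rel 'I_n) : {set 'I_n * 'I_n} :=
  [set p : 'I_n * 'I_n | (p.1 < p.2)%N && e p.1 p.2].

Definition num_edges (n : nat) (e : rel 'I_n) : nat := #|edges e|.

Definition connected_graph (n : nat) (e : rel 'I_n) : Prop :=
  forall u v : 'I_n, connect e u v.

Definition independent (n : nat) (e : rel 'I_n) (S : {set 'I_n}) : Prop :=
  forall u v, u \in S -> v \in S -> ~~ e u v.

(* Colorings using only the colors 1..N; color k+1 of the paper is k : 'I_N. *)
Definition proper (n N : nat) (e : rel 'I_n) (c : {ffun 'I_n -> 'I_N}) : bool :=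
  [forall u, forall v, e u v ==> (c u != c v)].

Definition asc (n N : nat) (e : rel 'I_n) (c : {ffun 'I_n -> 'I_N}) : nat :=
  #|[set p in edges e | (c p.1 < c p.2)%N]|.

(* Coefficient of x_1^(a_1) ... x_N^(a_N) q^k in X(G; x, q), where
   alpha = [:: a_1; ...; a_N].  Since every proper coloring contributing to
   this monomial only uses colors 1..N, it suffices to count colorings into
   'I_N. *)
Definition cqf_coef (n : nat) (e : rel 'I_n) (k : nat) (alpha : seq nat) : nat :=
  #|[set c : {ffun 'I_n -> 'I_(size alpha)} |
      [&& proper e c, asc e c == k &
          [forall i : 'I_(size alpha), #|[set v | c v == i]| == nth 0 alpha i]]]|.

Definition cqf_palindromic (n : nat) (e : rel 'I_n) : Prop :=
  forall (k : nat) (alpha : seq nat), (k <= num_edges e)%N ->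
    cqf_coef e k alpha = cqf_coef e (num_edges e - k) alpha.

(* Symmetric: each [q^k] X is invariant under permutations of the variables,
   i.e. the coefficient of x^alpha depends only on the multiset of exponents. *)
Definition cqf_symmetric (n : nat) (e : rel 'I_n) : Prop :=
  forall (k : nat) (alpha beta : seq nat), perm_eq alpha beta ->
    cqf_coef e k alpha = cqf_coef e k beta.

(* Main.v *)
Require Import Defs.
From mathcomp Require Import all_boot.
From mathcomp Require Import zify.
Set Implicit Arguments. Unset Strict Implicit. Unset Printing Implicit Defensive.

Lemma I2_neq3 (x y z : 'I_2) : x != y -> z != y -> x = z.
Proof. by case: x y z => [[|[|x]] hx] [[|[|y]] hy] [[|[|z]] hz] //= _ _; apply/val_inj. Qed.
Lemma I2_flip (x y z w : 'I_2) : x != y -> z != w -> (x == z) = (y == w).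
Proof. by case: x y z w => [[|[|x]] hx] [[|[|y]] hy] [[|[|z]] hz] [[|[|w]] hw]. Qed.

Theorem proposition5p3 (n : nat) (e : rel 'I_n) :
  simple_graph e ->
  connected_graph e ->
  odd (num_edges e) ->
  (exists A : {set 'I_n},
      [/\ independent e A, independent e (~: A) & #|A| != #|~: A|]) ->
  ~ cqf_palindromic e /\ ~ cqf_symmetric e.
Proof.
move=> [eirr esymm] conn modd [A [hA hB hab]].
have exor : forall u v, e u v -> (u \in A) != (v \in A).
  move=> u v euv; case uA: (u \in A); case vA: (v \in A) => //=.
  - by move: (hA u v uA vA); rewrite euv.
  - by move: (hB u v); rewrite !inE uA vA euv => /(_ isT isT).
pose c1 : {ffun 'I_n -> 'I_2} := [ffun u => if u \in A then ord0 else ord_max].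
pose c2 : {ffun 'I_n -> 'I_2} := [ffun u => if u \in A then ord_max else ord0].
have c12 : forall u, c1 u != c2 u by move=> u; rewrite !ffunE; case: (u \in A).
have pE : forall c : {ffun 'I_n -> 'I_2}, Defs.proper e c -> forall u v, e u v -> c u != c v.
  by move=> c pc u v euv; move/forallP: pc => /(_ u)/forallP/(_ v)/implyP; apply.
have pc1 : Defs.proper e c1.
  apply/forallP => u; apply/forallP => v; apply/implyP => euv.
  by move: (exor u v euv); rewrite !ffunE; case: (u \in A); case: (v \in A).
have pc2 : Defs.proper e c2.
  apply/forallP => u; apply/forallP => v; apply/implyP => euv.
  by move: (exor u v euv); rewrite !ffunE; case: (u \in A); case: (v \in A).
have dich : forall c : {ffun 'I_n -> 'I_2}, Defs.proper e c -> c = c1 \/ c = c2.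
  move=> c pc.
  have cl : closed e [pred u | c u == c1 u].
    by move=> u v euv /=; apply: I2_flip; [apply: pE | apply: pE pc1 _ _ _].
  case: (pickP [pred u | c u != c1 u]) => [u0 hu0 | none].
  - right; apply/ffunP => v.
    have := closed_connect cl (conn u0 v); rewrite !inE /= (negbTE hu0) => /esym/negbT hv.
    by apply: I2_neq3 hv _; rewrite eq_sym c12.
  - by left; apply/ffunP => v; move: (none v) => /= /negbFE /eqP.
have cnt1 : forall i : 'I_2, #|[set v | c1 v == i]| = nth 0 [:: #|A|; #|~: A|] i.
  case=> [[|[|i]] hi] //=; apply: eq_card => v; rewrite !inE ffunE; by case: (v \in A).
have cnt2 : forall i : 'I_2, #|[set v | c2 v == i]| = nth 0 [:: #|~: A|; #|A|] i.
  case=> [[|[|i]] hi] //=; apply: eq_card => v; rewrite !inE ffunE; by case: (v \in A).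
have asum : asc e c1 + asc e c2 = num_edges e.
  rewrite /asc /num_edges -(cardsID [set p | (c1 p.1 < c1 p.2)%N] (edges e)).
  congr (_ + _); apply: eq_card => -[u v]; rewrite !inE /= !ffunE;
    case euv: (e u v); rewrite ?andbF ?andFb //;
    have := exor u v euv; case: (u \in A); case: (v \in A) => //= _; by rewrite ?andbT ?andbF.
have k0m : asc e c1 != num_edges e - asc e c1.
  apply/eqP => h; have hm : num_edges e = asc e c1 + asc e c1 by lia.
  by move: modd; rewrite hm addnn odd_double.
have k0le : asc e c1 <= num_edges e by lia.
have c2asc : asc e c2 = num_edges e - asc e c1 by lia.
have hab' : #|~: A| != #|A| by rewrite eq_sym.
split.
- move=> pal; have := pal (asc e c1) [:: #|A|; #|~: A|] k0le.
  have h1 : 0 < cqf_coef e (asc e c1) [:: #|A|; #|~: A|].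
    apply/card_gt0P; exists c1; rewrite inE pc1 eqxx /=.
    by apply/forallP => i; rewrite cnt1.
  have h2 : cqf_coef e (num_edges e - asc e c1) [:: #|A|; #|~: A|] = 0.
    apply/eqP; apply/negPn/negP; rewrite -lt0n => /card_gt0P [c].
    rewrite inE => /and3P [pc /eqP ac /forallP fc].
    case: (dich c pc) => ec; subst c.
    + by move: k0m; rewrite {1}ac eqxx.
    + by move: (fc ord0); rewrite cnt2 /= (negbTE hab').
  by rewrite h2; move=> h; rewrite h in h1.
- move=> sym.
  have pp : perm_eq [:: #|A|; #|~: A|] [:: #|~: A|; #|A|].
    by apply/permP => p /=; lia.
  have := sym (asc e c1) _ _ pp.
  have h1 : 0 < cqf_coef e (asc e c1) [:: #|A|; #|~: A|].
    apply/card_gt0P; exists c1; rewrite inE pc1 eqxx /=.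
    by apply/forallP => i; rewrite cnt1.
  have h2 : cqf_coef e (asc e c1) [:: #|~: A|; #|A|] = 0.
    apply/eqP; apply/negPn/negP; rewrite -lt0n => /card_gt0P [c].
    rewrite inE => /and3P [pc /eqP ac /forallP fc].
    case: (dich c pc) => ec; subst c.
    + by move: (fc ord0); rewrite cnt1 /= (negbTE hab).
    + by move/eqP: k0m; rewrite -c2asc ac.
  by rewrite h2; move=> h; rewrite h in h1.
Qed.
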